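(* For every integer $d\ge1$, $\lim_{n\to\infty}\bar\delta_{n,d}=\frac{d^d}{(d+1)^{d+1}}$.
   Context: For integers $\lambda\ge0$, $d\ge1$, write $\lambda=\sum_{i=1}^d\binom{k_i}{i}$ uniquely with $k_d>\cdots>k_1\ge0$ and set $\lambda^{[d]}=\sum_{i=1}^d\binom{k_i}{i+1}$. For $n>d$ and $0\le\lambda\le\binom nd$ let $\delta_{n,d}(\lambda)=\lambda/\binom nd-\lambda^{[d]}/\binom n{d+1}$, and $\bar\delta_{n,d}=\max_{0\le\lambda\le\binom nd}\delta_{n,d}(\lambda)$ (denoted $\delta_{n,d}$ in the paper's section on limits). *)

(* Defs.v *)
From HB Require Import structures.
From Stdlib Require Import ClassicalEpsilon.
From mathcomp Require Import all_boot all_order all_algebra.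
From mathcomp Require Import all_classical all_reals all_analysis.
Set Implicit Arguments. Unset Strict Implicit. Unset Printing Implicit Defensive.
Import Order.TTheory GRing.Theory Num.Theory.
Local Open Scope ring_scope.

Definition is_cascade (d lam : nat) (k : nat -> nat) : Prop :=
  (forall i, (1 <= i)%N -> (i < d)%N -> (k i < k i.+1)%N) /\
  lam = (\sum_(1 <= i < d.+1) 'C(k i, i))%N.

(* The (unique) representation, chosen classically. *)
Definition cascade (d lam : nat) : nat -> nat :=
  epsilon (inhabits (fun _ : nat => 0%N)) (fun k => is_cascade d lam k).

Definition lam_up (d lam : nat) : nat :=
  (\sum_(1 <= i < d.+1) 'C(cascade d lam i, i.+1))%N.

Definition delta (R : realType) (n d lam : nat) : R :=
  lam%:R / ('C(n, d))%:R - (lam_up d lam)%:R / ('C(n, d.+1))%:R.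

(* max over 0 <= lam <= C(n,d) (the term lam = 0 gives 0, so the
   initial value 0 of the fold does not change the maximum). *)
Definition delta_bar (R : realType) (n d : nat) : R :=
  \big[Num.max/0]_(0 <= lam < ('C(n, d)).+1) delta R n d lam.

(* Main.v *)
Require Import Defs.
From HB Require Import structures.
From Stdlib Require Import ClassicalEpsilon.
From mathcomp Require Import all_boot all_order all_algebra.
From mathcomp Require Import all_classical all_reals all_analysis.
From mathcomp Require Import zify ring lra.
Import numFieldNormedType.Exports.
Import Order.TTheory GRing.Theory Num.Theory.

Lemma casc_lt d lam k : is_cascade d lam k -> (lam < 'C(k d + 1, d))%N.
Proof.
elim: d lam => [|d IH] lam [hm ->].
  by rewrite big_geq // bin0.
rewrite big_nat_recr //= addn1 binS.
have h1 : (\sum_(1 <= i < d.+1) 'C(k i, i) < 'C(k d.+1, d))%N.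
  have := IH (\sum_(1 <= i < d.+1) 'C(k i, i)) (conj (fun i h1 h2 => hm i h1 (ltnW h2)) erefl).
  case: d {IH} hm => [|d] hm; first by rewrite big_geq // !bin0.
  move=> h; apply: (leq_trans h); apply: leq_bin2l.
  by rewrite addn1; apply: hm.
by rewrite addnC ltn_add2l.
Qed.

Lemma bin_grow a j : (a <= 'C(a + j, j.+1))%N.
Proof.
elim: j => [|j IH]; first by rewrite addn0 bin1.
by rewrite addnS binS (leq_trans IH) // leq_addl.
Qed.

Lemma casc_ex d lam : exists k, is_cascade d.+1 lam k.
Proof.
elim: d lam => [|d IH] lam.
  exists (fun _ => lam); split => [i h1 h2|]; first by lia.
  by rewrite big_nat1 bin1.
have exP : exists w, (lam < 'C(w, d.+2))%N.
  by exists (lam.+1 + d.+1); apply: bin_grow.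
case: (ex_minnP exP) => m0 hm0 hmin.
have m0pos : (0 < m0)%N.
  by case: m0 hm0 {hmin} => //; rewrite bin0n.
have hle : ('C(m0.-1, d.+2) <= lam)%N.
  rewrite leqNgt; apply/negP => h.
  by have := hmin _ h; lia.
set lam' := (lam - 'C(m0.-1, d.+2))%N.
have hl' : (lam' < 'C(m0.-1, d.+1))%N.
  have := binS m0.-1 d.+1; rewrite prednK // /lam'; lia.
case: (IH lam') => k' [hk' hs].
exists (fun i => if i == d.+2 then m0.-1 else k' i); split.
  move=> i h1 h2; case: (ltngtP i d.+1) => hi.
  - by rewrite !ifN; [apply: hk'|lia|lia].
  - lia.
  - subst i; rewrite eqxx ifN; last by lia.
    rewrite ltnNge; apply/negP => h.
    have := leq_bin2l d.+1 h.
    have : ('C(k' d.+1, d.+1) <= lam')%N.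
      by rewrite hs big_nat_recr //= leq_addl.
    lia.
rewrite big_nat_recr //= eqxx.
rewrite (eq_big_nat _ _ (F2 := fun i => 'C(k' i, i))); last first.
  by move=> i hi; rewrite ifN //; lia.
by rewrite -hs /lam'; lia.
Qed.

Lemma cascade_spec d lam : (1 <= d)%N -> is_cascade d lam (cascade d lam).
Proof.
case: d => // d _; rewrite /cascade; apply: epsilon_spec; apply: casc_ex.
Qed.

Lemma bin_smono d a b : (d <= a)%N -> (a < b)%N -> ('C(a, d.+1) < 'C(b, d.+1))%N.
Proof.
move=> hda hab; apply: (@leq_trans 'C(a.+1, d.+1)); last exact: leq_bin2l.
by rewrite binS -addn1 leq_add2l bin_gt0.
Qed.

Lemma bin_ratio_up d m n : (m <= n)%N -> ('C(m, d) * n ^ d <= 'C(n, d) * m ^ d)%N.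
Proof.
move=> hmn; elim: d => [|d IH]; first by rewrite !bin0.
rewrite -(@leq_pmul2l d.+1) // !mulnA !mul_bin_left !expnS.
have h : ((m - d) * n <= (n - d) * m)%N by nia.
have := leq_mul h IH.
by rewrite -!mulnA (mulnCA n) (mulnCA m) !mulnA.
Qed.

Lemma bin_ratio_lo d e m n : (d <= e)%N -> ('C(n, d) * (m - e) ^ d <= 'C(m, d) * n ^ d)%N.
Proof.
elim: d => [|d IH] hde; first by rewrite !bin0.
rewrite -(@leq_pmul2l d.+1) // !mulnA !mul_bin_left !expnS.
have h : ((n - d) * (m - e) <= (m - d) * n)%N.
  by rewrite mulnC leq_mul // ?leq_subr //; lia.
have := leq_mul h (IH (ltnW hde)).
by rewrite -!mulnA (mulnCA (m - e)) (mulnCA n) !mulnA.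
Qed.

Lemma sum0_up (k : nat -> nat) (r : seq nat) :
  (\sum_(i <- r) 'C(k i, i) = 0)%N -> (\sum_(i <- r) 'C(k i, i.+1) = 0)%N.
Proof.
elim: r => [|x r IH]; first by rewrite !big_nil.
rewrite !big_cons => h.
have h1 : 'C(k x, x) = 0%N by lia.
have h2 : (\sum_(i <- r) 'C(k i, i) = 0)%N by lia.
rewrite IH // addn0 bin_small //.
by move: h1 => /eqP; rewrite -leqn0 leqNgt bin_gt0 -ltnNge => /ltnW.
Qed.

Local Open Scope classical_set_scope.
Local Open Scope ring_scope.

Lemma Qpos (R : realFieldType) d (a b : R) : 0 <= a -> 0 <= b ->
  0 <= d%:R * a ^+ d.+1 - d.+1%:R * a ^+ d * b + b ^+ d.+1.
Proof.
move=> ha hb; elim: d => [|d IH].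
  by rewrite !expr1 expr0; lra.
have h : 0 <= (a - b) * (a ^+ d.+1 - b ^+ d.+1).
  case: (lerP a b) => hab.
    apply: mulr_le0; first lra.
    by rewrite subr_le0 lerXn2r // nnegrE.
  apply: mulr_ge0; first lra.
  by rewrite subr_ge0 lerXn2r // ?nnegrE // ltW.
have h2 : 0 <= a * (d%:R * a ^+ d.+1 - d.+1%:R * a ^+ d * b + b ^+ d.+1).
  exact: mulr_ge0.
have e : d.+1%:R * a ^+ d.+2 - d.+2%:R * a ^+ d.+1 * b + b ^+ d.+2 =
  a * (d%:R * a ^+ d.+1 - d.+1%:R * a ^+ d * b + b ^+ d.+1) + (a - b) * (a ^+ d.+1 - b ^+ d.+1).
  rewrite !exprS -!natr1; ring.
rewrite e; exact: addr_ge0.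
Qed.

Lemma amgm (R : realFieldType) d (t : R) : (1 <= d)%N -> 0 <= t ->
  t ^+ d * (1 - t) <= d%:R ^+ d / d.+1%:R ^+ d.+1.
Proof.
move=> hd ht.
have hQ := @Qpos R d _ _ (mulr_ge0 (ler0n R d.+1) ht) (ler0n R d).
have hD : (0 : R) < d%:R by rewrite ltr0n.
rewrite ler_pdivlMr; last by rewrite exprn_gt0 // ltr0n.
move: hQ; rewrite !exprMn !exprS.
set A := d.+1%:R ^+ d; set B := (d%:R : R) ^+ d; set X := t ^+ d.
have hA : 0 < A by rewrite exprn_gt0 // ltr0n.
rewrite -natr1; set D := (d%:R : R).
move=> hQ.
nra.
Qed.

Lemma amgm_n (R : realFieldType) d (m n : R) : (1 <= d)%N -> 0 <= m -> 0 < n ->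
  m ^+ d * (n - m) <= d%:R ^+ d / d.+1%:R ^+ d.+1 * n ^+ d.+1.
Proof.
move=> hd hm hn.
have h := @amgm R d _ hd (divr_ge0 hm (ltW hn)).
have hp : 0 < n ^+ d.+1 by rewrite exprn_gt0.
rewrite -(ler_pM2r hp) in h.
apply: le_trans h; rewrite le_eqVlt; apply/orP; left; apply/eqP.
have nn : n != 0 by rewrite gt_eqF.
rewrite expr_div_n exprS; field.
by rewrite nn expf_neq0.
Qed.

Lemma upper_alg (R : realFieldType) (L up a b N M E G D nn T dd : R) :
  0 < N -> 0 < D -> 0 <= dd ->
  (dd + 1) * M = D * N -> L <= a + b -> E * a <= (dd + 1) * up ->
  a * D = a * E + a * G -> b * D <= dd * N -> a * G <= T * nn * N ->
  L / N - up / M <= (T * nn + dd) / D.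
Proof.
move=> hN hD hdd hM hL hup hDG hb haG.
have nN : N != 0 by rewrite gt_eqF.
have nD : D != 0 by rewrite gt_eqF.
have nd : dd + 1 != 0 by rewrite gt_eqF //; lra.
have eM : M = D * N / (dd + 1) by rewrite -hM; field.
have e1 : L / N - up / M = (L * D - (dd + 1) * up) / (D * N).
  by rewrite eM; field; rewrite nN nD nd.
rewrite e1 ler_pdivrMr; last exact: mulr_gt0.
have -> : (T * nn + dd) / D * (D * N) = T * nn * N + dd * N by field.
have : L * D <= (a + b) * D by rewrite ler_pM2r.
lra.
Qed.

Lemma lower_alg (R : realFieldType) (u a N M E G D nn dd : R) :
  0 < N -> 0 < D -> 0 <= dd -> 0 <= a -> 0 <= G -> D <= nn ->
  (dd + 1) * M = D * N -> (dd + 1) * u = E * a ->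
  a * D = a * E + a * G ->
  a * G / (nn * N) <= a / N - u / M.
Proof.
move=> hN hD hdd ha hG hDn hM hu hDG.
have nN : N != 0 by rewrite gt_eqF.
have nD : D != 0 by rewrite gt_eqF.
have nd : dd + 1 != 0 by rewrite gt_eqF //; lra.
have eM : M = D * N / (dd + 1) by rewrite -hM; field.
have eu : u = E * a / (dd + 1) by rewrite -hu; field.
have e1 : a / N - u / M = (a * D - a * E) / (D * N).
  by rewrite eM eu; field; rewrite nN nD nd.
rewrite e1 hDG.
have -> : a * E + a * G - a * E = a * G by ring.
have hn : 0 < nn by lra.
rewrite ler_wpM2l ?mulr_ge0 // lef_pV2 ?posrE ?mulr_gt0 //.
by rewrite ler_pM2r.
Qed.

Lemma upper_simpl (R : realFieldType) (nn dd T : R) :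
  0 <= T -> 0 <= dd -> 0 < nn - dd -> nn + 1 <= 2 * (nn - dd) ->
  (T * nn + dd) / (nn - dd) <= T + 2 * (T * dd + dd) / (nn + 1).
Proof.
move=> hT hd hD h2.
have nD : nn - dd != 0 by rewrite gt_eqF.
have nn1 : nn + 1 != 0 by rewrite gt_eqF //; lra.
have -> : (T * nn + dd) / (nn - dd) = T + (T * dd + dd) / (nn - dd) by field.
rewrite lerD2l.
have hp : 0 <= T * dd + dd by apply: addr_ge0 => //; exact: mulr_ge0.
rewrite ler_pdivrMr; last lra.
rewrite mulrAC ler_pdivlMr; last lra.
nra.
Qed.

Lemma lower_alg2 (R : realFieldType) d (a G E N nn dd y : R) :
  0 < N -> 0 < nn -> 0 <= a -> 0 <= G -> 0 <= E -> 0 <= dd ->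
  N * E ^+ d <= a * nn ^+ d -> nn <= (dd + 1) * G -> 0 <= y -> y <= E / nn ->
  y ^+ d / (dd + 1) <= a * G / (nn * N).
Proof.
move=> hN hn ha hG hE hdd h1 h2 hy0 hy.
have nN : N != 0 by rewrite gt_eqF.
have nn0 : nn != 0 by rewrite gt_eqF.
have -> : a * G / (nn * N) = (a / N) * (G / nn) by field; rewrite ?nN ?nn0.
apply: ler_pM.
- exact: exprn_ge0.
- rewrite invr_ge0; lra.
- apply: (@le_trans _ _ ((E / nn) ^+ d)).
    by rewrite lerXn2r // nnegrE // divr_ge0 // ltW.
  rewrite expr_div_n ler_pdivrMr ?exprn_gt0 //.
  rewrite mulrAC ler_pdivlMr //.
  by rewrite mulrC.
- rewrite ler_pdivlMr; last lra.
  rewrite mulrC ler_pdivrMr; last lra.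
  by rewrite mulrC.
Qed.

Lemma ybound (R : realFieldType) (nn dd E : R) :
  1 <= nn -> 0 <= dd -> dd * nn <= (dd + 1) * E + (dd + 1) ^+ 2 ->
  dd / (dd + 1) - 2 * (dd + 1) / (nn + 1) <= E / nn.
Proof.
move=> hn hd h.
have nn0 : nn != 0 by rewrite gt_eqF //; lra.
rewrite ler_pdivlMr; last lra.
have e : (dd / (dd + 1) - 2 * (dd + 1) / (nn + 1)) * nn =
   dd * nn / (dd + 1) - (dd + 1) * (2 * nn / (nn + 1)).
  by field; rewrite !gt_eqF //; lra.
rewrite e.
have h1 : dd * nn / (dd + 1) <= E + (dd + 1).
  rewrite ler_pdivrMr; last lra.
  rewrite expr2 in h; lra.
have h2 : 1 <= 2 * nn / (nn + 1).
  rewrite ler_pdivlMr; last lra.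
  lra.
have h3 : dd + 1 <= (dd + 1) * (2 * nn / (nn + 1)).
  by rewrite -[X in X <= _]mulr1 ler_wpM2l //; lra.
lra.
Qed.

Lemma ypos (R : realFieldType) (nn dd : R) :
  1 <= dd -> 2 * (dd + 1) ^+ 2 <= nn ->
  0 <= dd / (dd + 1) - 2 * (dd + 1) / (nn + 1).
Proof.
move=> hd hn.
rewrite expr2 in hn.
rewrite subr_ge0 ler_pdivrMr; last nra.
rewrite mulrAC ler_pdivlMr; last lra.
nra.
Qed.


Definition Tt (R : realType) d : R := d%:R ^+ d / d.+1%:R ^+ d.+1.

Lemma delta_upper (R : realType) d n lam : (1 <= d)%N -> (2 * d < n)%N ->
  (lam <= 'C(n, d))%N ->
  delta R n d lam <= (Tt R d * n%:R + d%:R) / (n - d)%:R.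
Proof.
case: d => [//|d] _ hn hlam.
have [hmono hsum] := cascade_spec d.+1 lam isT.
have hup : ('C(cascade d.+1 lam d.+1, d.+2) <= lam_up d.+1 lam)%N.
  by rewrite /lam_up big_nat_recr //= leq_addl.
rewrite /delta.
move: (lam_up d.+1 lam) hup => up hup.
move: (cascade d.+1 lam) hmono hsum hup => k hmono hsum hup.
have hlt := @casc_lt d.+1 lam k (conj hmono hsum).
set m := k d.+1 in hup hlt.
have ha : ('C(m, d.+1) <= lam)%N by rewrite hsum big_nat_recr //= leq_addl.
have hmn : (m <= n)%N.
  rewrite leqNgt; apply/negP => h.
  have := @bin_smono d n m ltac:(lia) h; lia.
have F1 : (lam <= 'C(m, d.+1) + 'C(m, d))%N.
  by move: hlt; rewrite addn1 binS; lia.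
have F2 := mul_bin_left m d.+1.
have F3 := mul_bin_left n d.+1.
have F4 : ('C(m, d.+1) * (n - d.+1) = 'C(m, d.+1) * (m - d.+1) + 'C(m, d.+1) * (n - m))%N.
  case: (leqP d.+1 m) => h.
    rewrite -mulnDr; congr (_ * _)%N; lia.
  by rewrite bin_small.
have F5 : ('C(m, d) * (n - d.+1) <= d.+1 * 'C(n, d.+1))%N.
  rewrite mul_bin_left.
  have h1 := leq_bin2l d hmn.
  have h2 : (n - d.+1 <= n - d)%N by lia.
  by rewrite mulnC leq_mul.
have F6 := @bin_ratio_up d.+1 m n hmn.
have hN : (0 : R) < 'C(n, d.+1)%:R by rewrite ltr0n bin_gt0; lia.
have hD : (0 : R) < (n - d.+1)%:R by rewrite ltr0n; lia.
apply: (@upper_alg R _ _ ('C(m, d.+1))%:R ('C(m, d))%:R _ _ (m - d.+1)%:R (n - m)%:R).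
- exact: hN.
- exact: hD.
- exact: ler0n.
- by rewrite natr1 -!natrM F3.
- by rewrite -natrD ler_nat.
- by rewrite natr1 -!natrM ler_nat -F2 leq_mul2l hup orbT.
- by rewrite -!natrM -natrD F4.
- rewrite -!natrM ler_nat; apply: leq_trans F5.
  by rewrite leq_mul.
- set a := ('C(m, d.+1))%:R : R; set N := ('C(n, d.+1))%:R : R.
  have hn0 : (0 : R) < n%:R by rewrite ltr0n; lia.
  have hF6 : a * n%:R ^+ d.+1 <= N * m%:R ^+ d.+1.
    by rewrite -!natrX -!natrM ler_nat.
  have hG : (n - m)%:R = n%:R - m%:R :> R by rewrite natrB.
  have hA := @amgm_n R d.+1 m%:R n%:R isT (ler0n _ _) hn0.
  have hp : (0 : R) < n%:R ^+ d.+1 by rewrite exprn_gt0.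
  rewrite -(ler_pM2r hp).
  have ha0 : 0 <= a by rewrite ler0n.
  have hN0 : 0 <= N by rewrite ler0n.
  have hG0 : (0 : R) <= (n - m)%:R by rewrite ler0n.
  apply: (@le_trans _ _ ((N * m%:R ^+ d.+1) * (n - m)%:R)).
    by rewrite mulrAC ler_wpM2r.
  rewrite hG -mulrA.
  apply: (@le_trans _ _ (N * (Tt R d.+1 * n%:R ^+ d.+2))).
    by rewrite ler_wpM2l.
  rewrite /Tt !exprS le_eqVlt; apply/orP; left; apply/eqP; ring.
Qed.


Lemma delta_lower (R : realType) d n : (1 <= d)%N -> (2 * d.+1 ^ 2 <= n)%N ->
  let m := ((d * n) %/ d.+1)%N in
  ('C(m, d) <= 'C(n, d))%N /\
  (d%:R / (d%:R + 1) - 2 * (d%:R + 1) / (n%:R + 1)) ^+ d / (d%:R + 1)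
     <= delta R n d 'C(m, d).
Proof.
case: d => [//|d] _ hn m.
have hm1 : (m * d.+2 <= d.+1 * n)%N by apply: leq_trunc_div.
have hm2 : (d.+1 * n < m.+1 * d.+2)%N by apply: ltn_ceil.
have hmd : (d.+1 <= m)%N by nia.
have hmn : (m <= n)%N by nia.
have hle := leq_bin2l d.+1 hmn.
split => //.
have [hmono hsum] := cascade_spec d.+1 'C(m, d.+1) isT.
have hlt := @casc_lt d.+1 _ _ (conj hmono hsum).
have hupE : lam_up d.+1 'C(m, d.+1) = 'C(m, d.+2).
  rewrite /lam_up.
  move: (cascade d.+1 'C(m, d.+1)) hmono hsum hlt => k hmono hsum hlt.
  have hkd : k d.+1 = m.
    apply/eqP; rewrite eqn_leq; apply/andP; split.
      rewrite leqNgt; apply/negP => h.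
      have := @bin_smono d m (k d.+1) ltac:(lia) h.
      rewrite hsum big_nat_recr //=; lia.
    rewrite leqNgt; apply/negP => h.
    have := leq_bin2l d.+1 (h : (k d.+1).+1 <= m)%N; rewrite addn1 in hlt; lia.
  rewrite big_nat_recr //= hkd in hsum.
  rewrite big_nat_recr //= hkd.
  rewrite (@sum0_up k) //; lia.
rewrite /delta hupE.
have hN : (0 : R) < 'C(n, d.+1)%:R by rewrite ltr0n bin_gt0; lia.
have hD : (0 : R) < (n - d.+1)%:R by rewrite ltr0n; lia.
have hn0 : (0 : R) < n%:R by rewrite ltr0n; lia.
apply: le_trans; last first.
  apply: (@lower_alg R _ _ _ _ (m - d.+1)%:R (n - m)%:R (n - d.+1)%:R n%:R d.+1%:R).
  - exact: hN.
  - exact: hD.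
  - exact: ler0n.
  - exact: ler0n.
  - exact: ler0n.
  - by rewrite ler_nat; lia.
  - by rewrite natr1 -!natrM mul_bin_left.
  - by rewrite natr1 -!natrM mul_bin_left.
  - rewrite -!natrM -natrD; congr (_%:R).
    rewrite -mulnDr; congr (_ * _)%N; lia.
apply: (@lower_alg2 R d.+1 _ _ (m - d.+1)%:R).
- exact: hN.
- exact: hn0.
- exact: ler0n.
- exact: ler0n.
- exact: ler0n.
- exact: ler0n.
- rewrite -!natrX -!natrM ler_nat.
exact: bin_ratio_lo.
- rewrite natr1 -natrM ler_nat; nia.
- apply: ypos.
    by rewrite ler1n.
  rewrite natr1 -natrX -natrM ler_nat //.
- apply: ybound.
  + by rewrite ler1n; lia.
  + exact: ler0n.
  + rewrite natr1 -natrX -!natrM -natrD ler_nat; nia.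
Qed.


Lemma powcvg (R : realType) (f : nat -> R) (a : R) k : f n @[n --> \oo] --> a -> (f n ^+ k) @[n --> \oo] --> a ^+ k.
Proof.
move=> hf; elim: k => [|k IH].
  rewrite expr0; under eq_fun do rewrite expr0. exact: cvg_cst.
rewrite exprS; under eq_fun do rewrite exprS. exact: cvgM.
Qed.

Lemma lim_y (R : realType) (c K : R) :
  (c - K / (n%:R + 1)) @[n --> \oo] --> c.
Proof.
have -> : (fun n : nat => c - K / (n%:R + 1)) = (fun n => c - K * harmonic n).
  by apply: funext => n; rewrite /harmonic /= -natr1.
rewrite -[X in _ --> X]subr0 -[X in _ --> _ - X](mulr0 K).
apply: cvgB; first exact: cvg_cst.
apply: cvgMl_tmp; exact: cvg_harmonic.
Qed.

Theorem proposition6p3 (R : realType) (d : nat) (hd : (1 <= d)%N) :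
  (fun n : nat => delta_bar R n d) @ \oo -->
    ((d%:R : R) ^+ d / (d.+1)%:R ^+ d.+1).
Proof.
set dd : R := d%:R.
have hdd : (1 : R) <= dd by rewrite ler1n.
have hT0 : 0 <= Tt R d by rewrite /Tt divr_ge0 // exprn_ge0.
set K : R := 2 * (Tt R d * dd + dd).
apply: (squeeze_cvgr
  (f := fun n : nat => (dd / (dd + 1) - 2 * (dd + 1) / (n%:R + 1)) ^+ d / (dd + 1))
  (h := fun n : nat => Tt R d + K / (n%:R + 1))).
- exists (2 * d.+1 ^ 2)%N => // n /= hn; apply/andP; split.
  + have [hin hlo] := @delta_lower R d n hd hn.
    rewrite /dd; apply: (le_trans hlo).
    rewrite /delta_bar; apply: le_bigmax_seq => //.
    by rewrite mem_index_iota.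
  + rewrite /delta_bar big_seq; apply: bigmax_le.
      apply: addr_ge0 => //; apply: divr_ge0; last by rewrite addr_ge0.
      by rewrite /K mulr_ge0 // addr_ge0 // ?mulr_ge0 //; lra.
    move=> i; rewrite mem_index_iota => /andP[_ hi].
    have hn2 : (2 * d < n)%N by nia.
    apply: le_trans (@delta_upper R d n i hd hn2 hi) _.
    have hB : (n - d)%:R = n%:R - dd :> R by rewrite natrB //; lia.
    rewrite hB; apply: upper_simpl => //.
      by rewrite -natrB ?ltr0n; lia.
    by rewrite -natrB ?natr1 -?(natrM _ 2) ?ler_nat; lia.
- rewrite [X in _ --> X](_ : _ = (dd / (dd + 1)) ^+ d / (dd + 1)); last first.
    rewrite expr_div_n natr1 exprS; field.
    have h1 : (d.+1%:R : R) != 0 by rewrite pnatr_eq0.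
    by rewrite nat1r h1 expf_neq0.
  apply: (cvgMr_tmp (f := fun n : nat => (dd / (dd + 1) - 2 * (dd + 1) / (n%:R + 1)) ^+ d)).
  apply: powcvg; exact: lim_y.
- have -> : (fun n : nat => Tt R d + K / (n%:R + 1)) =
            (fun n : nat => Tt R d - (- K) / (n%:R + 1)).
    by apply: funext => n; rewrite mulNr opprK.
  exact: lim_y.
Qed.
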